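(* Let $h_1,h_2:(0,\infty)\to\mathbb{R}$ be convex. Then (i) $\partial X(h_1,h_2)\setminus C(h_1,h_2)\subseteq\operatorname{supp}(h_2)$, and (ii) $\partial X(h_2,h_1)\setminus C(h_1,h_2)\subseteq\operatorname{supp}(h_1)$.
   Context: Boundaries are taken in the space $(0,\infty)$. $X(h_1,h_2):=\{x>0:h_1(x)<h_2(x)\}$. $\operatorname{supp}(h):=\{x>0:\text{for every open }U\ni x,\ h|_U\text{ is not affine}\}$. $C(h_1,h_2)$ is the set of simple crossing points: those $x>0$ for which there is $r>1$ with either $(xr^{-1},x)\subseteq X(h_1,h_2)$ and $(x,xr)\subseteq X(h_2,h_1)$, or $(xr^{-1},x)\subseteq X(h_2,h_1)$ and $(x,xr)\subseteq X(h_1,h_2)$. *)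

(* Defs.v *)
From Stdlib Require Export Reals.
Open Scope R_scope.

(* Functions (0,oo) -> R are modelled as R -> R; only values on (0,oo) matter. *)
Definition pos (x : R) : Prop := 0 < x.

Definition convex_pos (h : R -> R) : Prop :=
  forall x y t, 0 < x -> 0 < y -> 0 <= t <= 1 ->
    h (t * x + (1 - t) * y) <= t * h x + (1 - t) * h y.

Definition Xset (h1 h2 : R -> R) (x : R) : Prop := 0 < x /\ h1 x < h2 x.

(* Open subsets of the space (0,oo): traces U ∩ (0,oo) of open U ⊆ R. *)
Definition boundary_pos (A : R -> Prop) (x : R) : Prop :=
  0 < x /\
  forall U : R -> Prop, open_set U -> U x ->
    (exists y, U y /\ 0 < y /\ A y) /\ (exists y, U y /\ 0 < y /\ ~ A y).

Definition affine_on (h : R -> R) (D : R -> Prop) : Prop :=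
  exists a b, forall y, D y -> h y = a * y + b.

Definition supp (h : R -> R) (x : R) : Prop :=
  0 < x /\
  forall U : R -> Prop, open_set U -> U x ->
    ~ affine_on h (fun y => U y /\ 0 < y).

Definition Cset (h1 h2 : R -> R) (x : R) : Prop :=
  0 < x /\
  exists r, 1 < r /\
   (((forall y, x / r < y < x -> Xset h1 h2 y) /\
     (forall y, x < y < x * r -> Xset h2 h1 y)) \/
    ((forall y, x / r < y < x -> Xset h2 h1 y) /\
     (forall y, x < y < x * r -> Xset h1 h2 y))).

(* Main.v *)
Require Import Defs.
From Stdlib Require Import Lra Psatz.
Lemma core (g : R -> R) (x d : R) :
  0 < d ->
  (forall a b c, x - d < a -> a < b -> b < c -> c < x + d ->
     (c - a) * g b <= (c - b) * g a + (b - a) * g c) ->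
  (forall e, 0 < e -> exists y, x - e < y < x + e /\ g y < 0) ->
  (forall e, 0 < e -> exists y, x - e < y < x + e /\ ~ g y < 0) ->
  exists e, 0 < e /\
   (((forall y, x - e < y < x -> g y < 0) /\ (forall y, x < y < x + e -> 0 < g y)) \/
    ((forall y, x - e < y < x -> 0 < g y) /\ (forall y, x < y < x + e -> g y < 0))).
Proof.
  intros Hd Hb Hneg Hnn.
  destruct (Rlt_or_le (g x) 0) as [Hx|Hx].
  - exfalso.
    set (K := Rabs (g (x + d/2) - g x) + Rabs (g (x - d/2) - g x) + 1).
    assert (HK : 0 < K) by (unfold K; pose proof (Rabs_pos (g (x + d/2) - g x));
      pose proof (Rabs_pos (g (x - d/2) - g x)); lra).
    assert (HK1 : g (x + d/2) - g x <= K) by (unfold K; pose proof (Rle_abs (g (x + d/2) - g x));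
      pose proof (Rabs_pos (g (x - d/2) - g x)); lra).
    assert (HK2 : g (x - d/2) - g x <= K) by (unfold K; pose proof (Rle_abs (g (x - d/2) - g x));
      pose proof (Rabs_pos (g (x + d/2) - g x)); lra).
    set (e := Rmin (d/2) (- (d/2) * g x / K)).
    assert (He1 : e <= d/2) by apply Rmin_l.
    assert (He2 : e <= - (d/2) * g x / K) by apply Rmin_r.
    assert (He0 : 0 < e).
    { unfold e; apply Rmin_pos; [lra|]. apply Rdiv_lt_0_compat; nra. }
    assert (HeK : e * K <= - (d/2) * g x).
    { apply (Rmult_le_compat_r K) in He2; [|lra].
      replace (- (d / 2) * g x / K * K) with (- (d/2) * g x) in He2 by (field; lra). lra. }
    destruct (Hnn e He0) as [y [Hy Hgy]]. apply Hgy.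
    destruct (Rtotal_order y x) as [Hl|[He|Hr]].
    +
      pose proof (Hb (x - d/2) y x ltac:(lra) ltac:(lra) Hl ltac:(lra)) as H.
      assert ((x - y) * (g (x - d/2) - g x) < - (d/2) * g x).
      { apply Rle_lt_trans with ((x - y) * K). apply Rmult_le_compat_l; lra.
        apply Rlt_le_trans with (e * K); [apply Rmult_lt_compat_r; lra | lra]. }
      assert ((x - (x - d/2)) * g y < 0) by nra. nra.
    + subst; auto.
    + pose proof (Hb x y (x + d/2) ltac:(lra) Hr ltac:(lra) ltac:(lra)) as H.
      assert ((y - x) * (g (x + d/2) - g x) < - (d/2) * g x).
      { apply Rle_lt_trans with ((y - x) * K). apply Rmult_le_compat_l; lra.
        apply Rlt_le_trans with (e * K); [apply Rmult_lt_compat_r; lra | lra]. }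
      assert ((x + d/2 - x) * g y < 0) by nra. nra.
  - destruct (Hneg d Hd) as [y0 [Hy0 Hg0]].
    destruct (Rtotal_order y0 x) as [Hl|[He|Hr]].
    +
      assert (Hpos : forall w, x < w < x + d -> 0 < g w).
      { intros w Hw. destruct (Rlt_or_le 0 (g w)) as [|Hw']; auto. exfalso.
        pose proof (Hb y0 x w ltac:(lra) Hl ltac:(lra) ltac:(lra)). nra. }
      exists (Rmin (x - y0) d). split. apply Rmin_pos; lra.
      left. split.
      * intros y Hy. assert (Hm1 := Rmin_l (x - y0) d).
        destruct (Hneg (x - y) ltac:(lra)) as [y1 [Hy1 Hg1]].
        destruct (Rtotal_order y1 x) as [Hl1|[He1|Hr1]].
        -- pose proof (Hb y0 y y1 ltac:(lra) ltac:(lra) ltac:(lra) ltac:(lra)). nra.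
        -- subst; lra.
        -- assert (0 < g y1) by (apply Hpos; lra). lra.
      * intros y Hy. apply Hpos. pose proof (Rmin_r (x - y0) d). lra.
    + subst; lra.
    + assert (Hpos : forall w, x - d < w < x -> 0 < g w).
      { intros w Hw. destruct (Rlt_or_le 0 (g w)) as [|Hw']; auto. exfalso.
        pose proof (Hb w x y0 ltac:(lra) ltac:(lra) Hr ltac:(lra)). nra. }
      exists (Rmin (y0 - x) d). split. apply Rmin_pos; lra.
      right. split.
      * intros y Hy. apply Hpos. pose proof (Rmin_r (y0 - x) d). lra.
      * intros y Hy. assert (Hm1 := Rmin_l (y0 - x) d).
        destruct (Hneg (y - x) ltac:(lra)) as [y1 [Hy1 Hg1]].
        destruct (Rtotal_order y1 x) as [Hl1|[He1|Hr1]].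
        -- assert (0 < g y1) by (apply Hpos; lra). lra.
        -- subst; lra.
        -- pose proof (Hb y1 y y0 ltac:(lra) ltac:(lra) ltac:(lra) ltac:(lra)). nra.
Qed.

Lemma ball_open (x m : R) : open_set (fun y => x - m < y < x + m).
Proof.
  intros y Hy.
  assert (Hp : 0 < Rmin (y - (x - m)) (x + m - y)) by (apply Rmin_pos; lra).
  exists (mkposreal _ Hp). intros z Hz. unfold disc in Hz; simpl in Hz.
  apply Rabs_def2 in Hz. pose proof (Rmin_l (y - (x - m)) (x + m - y)).
  pose proof (Rmin_r (y - (x - m)) (x + m - y)). lra.
Qed.

Lemma part (A B : R -> R) (x : R) :
  convex_pos A -> boundary_pos (Xset A B) x -> ~ Cset A B x -> supp B x.
Proof.
  intros HA [Hx Hbd] HnC. split; auto.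
  intros U HU HUx [a [b Hab]]. apply HnC.
  destruct (HU x HUx) as [d0 Hd0].
  set (d := Rmin d0 (x/2)).
  assert (Hd1 : d <= d0) by apply Rmin_l. assert (Hd2 : d <= x/2) by apply Rmin_r.
  assert (Hdp : 0 < d) by (apply Rmin_pos; [apply cond_pos | lra]).
  assert (Hin : forall y, x - d < y < x + d -> U y /\ 0 < y).
  { intros y Hy. split. 2: lra. apply Hd0. unfold disc. simpl. apply Rabs_def1; lra. }
  set (g := fun y => A y - (a * y + b)).
  assert (Hb : forall a' b' c', x - d < a' -> a' < b' -> b' < c' -> c' < x + d ->
     (c' - a') * g b' <= (c' - b') * g a' + (b' - a') * g c').
  { intros a' b' c' H1 H2 H3 H4.
    assert (HAi : (c' - a') * A b' <= (c' - b') * A a' + (b' - a') * A c').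
    { set (t := (c' - b') / (c' - a')).
      assert (Ht : 0 <= t <= 1).
      { assert (0 < t) by (unfold t; apply Rdiv_lt_0_compat; lra).
        assert (Et : 1 - t = (b' - a') / (c' - a')) by (unfold t; field; lra).
        assert (0 < (b' - a') / (c' - a')) by (apply Rdiv_lt_0_compat; lra).
        lra. }
      pose proof (HA a' c' t ltac:(lra) ltac:(lra) Ht) as H.
      replace (t * a' + (1 - t) * c') with b' in H by (unfold t; field; lra).
      apply (Rmult_le_compat_l (c' - a')) in H; [|lra].
      replace ((c' - a') * (t * A a' + (1 - t) * A c')) with
        ((c' - b') * A a' + (b' - a') * A c') in H by (unfold t; field; lra).
      exact H. }
    unfold g.
    assert (E : (c' - a') * (A b' - (a * b' + b)) - ((c' - b') * (A a' - (a * a' + b)) + (b' - a') * (A c' - (a * c' + b))) = (c' - a') * A b' - ((c' - b') * A a' + (b' - a') * A c')) by ring.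
    lra. }
  assert (Hneg : forall e, 0 < e -> exists y, x - e < y < x + e /\ g y < 0).
  { intros e He. pose proof (Rmin_l e d). pose proof (Rmin_r e d).
    assert (Hm : 0 < Rmin e d) by (apply Rmin_pos; lra).
    destruct (Hbd _ (ball_open x (Rmin e d)) ltac:(lra)) as [[y [Hy1 [Hy2 Hy3]]] _].
    exists y. split; [lra|]. destruct Hy3 as [_ Hy3].
    rewrite (Hab y (Hin y ltac:(lra))) in Hy3. unfold g; lra. }
  assert (Hnn : forall e, 0 < e -> exists y, x - e < y < x + e /\ ~ g y < 0).
  { intros e He. pose proof (Rmin_l e d). pose proof (Rmin_r e d).
    assert (Hm : 0 < Rmin e d) by (apply Rmin_pos; lra).
    destruct (Hbd _ (ball_open x (Rmin e d)) ltac:(lra)) as [_ [y [Hy1 [Hy2 Hy3]]]].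
    exists y. split; [lra|]. intro Hc. apply Hy3. split; auto.
    rewrite (Hab y (Hin y ltac:(lra))). unfold g in Hc; lra. }
  destruct (core g x d Hdp Hb Hneg Hnn) as [e [He Hcase]].
  set (e' := Rmin e d). assert (He1 : e' <= e) by apply Rmin_l. assert (He2 : e' <= d) by apply Rmin_r.
  assert (He' : 0 < e') by (apply Rmin_pos; lra).
  split; auto. exists (1 + e' / x).
  assert (Hr : 0 < e' / x) by (apply Rdiv_lt_0_compat; lra).
  assert (E1 : x / (1 + e' / x) = x * x / (x + e')) by (field; lra).
  assert (E2 : x * (1 + e' / x) = x + e') by (field; lra).
  assert (E3 : x * x / (x + e') - (x - e') = e' * e' / (x + e')) by (field; lra).
  assert (E4 : 0 < e' * e' / (x + e')) by (apply Rdiv_lt_0_compat; nra).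
  assert (E5 : 0 < x * x / (x + e')) by (apply Rdiv_lt_0_compat; nra).
  rewrite E1, E2. split; [lra|].
  assert (HX : forall y, x - e' < y < x + e' -> (Xset A B y <-> g y < 0) /\ (Xset B A y <-> 0 < g y)).
  { intros y Hy. destruct (Hin y ltac:(lra)) as [HU' Hy0].
    pose proof (Hab y (conj HU' Hy0)) as HB. unfold Xset, g. rewrite HB.
    split; split; intros; try split; try tauto; try lra. }
  destruct Hcase as [[L R]|[L R]]; [left|right]; split; intros y Hy;
    destruct (HX y ltac:(lra)) as [[_ X1] [_ X2]];
    first [apply X1 | apply X2]; first [apply L | apply R]; lra.
Qed.

Lemma Csym (h1 h2 : R -> R) x : Cset h2 h1 x -> Cset h1 h2 x.
Proof.
  intros [Hx [r [Hr [[H1 H2]|[H1 H2]]]]]; split; auto; exists r; split; auto.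
Qed.

Theorem proposition6p4 (h1 h2 : R -> R) :
  convex_pos h1 -> convex_pos h2 ->
  (forall x, boundary_pos (Xset h1 h2) x -> ~ Cset h1 h2 x -> supp h2 x) /\
  (forall x, boundary_pos (Xset h2 h1) x -> ~ Cset h1 h2 x -> supp h1 x).
Proof.
  intros H1 H2. split; intros x Hb HC.
  - exact (part h1 h2 x H1 Hb HC).
  - exact (part h2 h1 x H2 Hb (fun C => HC (Csym h1 h2 x C))).
Qed.
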